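(* If a topological space $X$ admits an $\omega^\omega$-base at a point $x\in X$, then $X$ is $(\omega_1,\omega)_k$-equiconvergent at $x$.
   Context: $X$ has an $\omega^\omega$-base at $x$ if there is a neighborhood base $(U_\alpha)_{\alpha\in\omega^\omega}$ at $x$ with $U_\beta\subseteq U_\alpha$ whenever $\alpha\le\beta$ pointwise in $\omega^\omega$. $X$ is $(\omega_1,\omega)_k$-equiconvergent at $x$ if for every indexed family $\{x_\alpha\}_{\alpha\in\omega_1}$ of sequences in $X^\omega$ converging to $x$ there is a countably infinite $\Lambda\subseteq\omega_1$ such that for every neighborhood $O_x$ of $x$ there is $n\in\omega$ with $x_\alpha(m)\in O_x$ for all $m\ge n$ and all $\alpha\in\Lambda$. *)

(* Defs.v *)
From HB Require Import structures.
From mathcomp Require Import all_boot all_order.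
From mathcomp Require Import all_classical all_reals all_analysis.
From Stdlib Require Import Wellfounded.
Set Implicit Arguments. Unset Strict Implicit. Unset Printing Implicit Defensive.
Local Open Scope classical_set_scope.

Definition is_omega1 (I : Type) (lt : I -> I -> Prop) : Prop :=
  [/\ (forall a, ~ lt a a),
      (forall a b c, lt a b -> lt b c -> lt a c),
      (forall a b, lt a b \/ a = b \/ lt b a) &
      well_founded lt] /\
  (~ countable [set: I] /\ (forall a, countable [set b | lt b a])).

Definition le_pw (a b : nat -> nat) : Prop := forall n, (a n <= b n)%N.

Definition has_omega_omega_base (X : topologicalType) (x : X) : Prop :=
  exists U : (nat -> nat) -> set X,
    [/\ (forall a, nbhs x (U a)),
        (forall O, nbhs x O -> exists a, U a `<=` O) &
        (forall a b, le_pw a b -> U b `<=` U a)].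

(* X is (omega_1, omega)_k-equiconvergent at x; the index set omega_1 is
   represented by any (I, lt) satisfying is_omega1. *)
Definition equiconvergent_w1_w (X : topologicalType) (x : X)
  (I : Type) : Prop :=
  forall s : I -> nat -> X,
    (forall a, s a @ \oo --> x) ->
    exists L : set I,
      [/\ countable L, infinite_set L &
          forall O, nbhs x O ->
            exists n : nat, forall m, (n <= m)%N -> forall a, L a -> O (s a m)].

(* Main.v *)
Require Import Defs.
From mathcomp Require Import all_boot all_order.
From mathcomp Require Import all_classical all_reals all_analysis.
Local Open Scope classical_set_scope.

Lemma condense {T : countType} {I : Type} (S : T -> set I) :
  ~ countable [set: I] -> exists b, forall C, S C b -> infinite_set (S C).
Proof.
move=> nc; apply: contrapT => /forallNP H; apply: nc.
apply: (@sub_countable _ _ _ (\bigcup_(C in [set C | finite_set (S C)]) S C)).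
  apply: subset_card_le => b _.
  have /existsNP[C /not_implyP[SC /contrapT fC]] := H b.
  by exists C.
apply: bigcup_countable; first exact: countableP.
by move=> C /= fC; apply: finite_set_countable.
Qed.

Lemma ev {X : topologicalType} {x : X} {u : nat -> X} {V : set X} :
  u @ \oo --> x -> nbhs x V -> exists N, forall m, (N <= m)%N -> V (u m).
Proof.
move=> hu hV; have := hu _ hV; case=> N _ HN; exists N => m hm; exact: HN.
Qed.

Lemma finite_list (I : Type) (h : seq I) : finite_set [set a | List.In a h].
Proof.
elim: h => [|y h IH].
  by apply: (sub_finite_set (B := set0)) => // a [].
apply: (sub_finite_set (B := [set y] `|` [set a | List.In a h])).
  by move=> a /= [->|?]; [left|right].
by rewrite finite_setU; split=> //; apply: finite_set1.
Qed.

Lemma banakh (X : topologicalType) (x : X) (U : (nat -> nat) -> set X)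
  (hU1 : forall a, nbhs x (U a)) (hU3 : forall a b, le_pw a b -> U b `<=` U a)
  (u : nat -> X) (hu : u @ \oo --> x) (al : nat -> nat) :
  exists k n, forall m, (n <= m)%N -> forall be, mkseq be k = mkseq al k -> U be (u m).
Proof.
apply: contrapT => H.
have H' : forall k, exists p : nat * (nat -> nat),
    [/\ (k <= p.1)%N, mkseq p.2 k = mkseq al k & ~ U p.2 (u p.1)].
  move=> k; apply: contrapT => Hk; apply: H; exists k, k => m hm be hbe.
  apply: contrapT => nU; apply: Hk; by exists (m, be).
have [f hf] := choice H'.
pose ga i := maxn (al i) (\max_(k < i.+1) (f k).2 i).
have hga : forall k, le_pw (f k).2 ga.
  move=> k i; case: (ltnP i k) => hik.
    have [_ e _] := hf k.
    have : nth 0 (mkseq (f k).2 k) i = nth 0 (mkseq al k) i by rewrite e.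
    rewrite !nth_mkseq // => ->; exact: leq_maxl.
  apply: leq_trans (leq_maxr _ _).
  have hk : (k < i.+1)%N by rewrite ltnS.
  exact: (@leq_bigmax _ (fun j : 'I_i.+1 => (f j).2 i) (Ordinal hk)).
have [N HN] := ev hu (hU1 ga).
have [h1 _ h3] := hf N; apply: h3; apply: (hU3 _ _ (hga N)); exact: HN.
Qed.

Theorem theorem4p1 (X : topologicalType) (x : X)
  (I : Type) (lt : I -> I -> Prop) (HI : is_omega1 lt) :
  has_omega_omega_base x -> equiconvergent_w1_w x I.
Proof.
move=> [U [hU1 hU2 hU3]] s hs.
have [_ [ncI _]] := HI.
pose Sat a (t : seq nat) n := forall m, (n <= m)%N -> forall be,
  mkseq be (size t) = t -> U be (s a m).
pose S (C : seq (seq nat * nat)) := [set a | forall c, c \in C -> Sat a c.1 c.2].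
have [b Hb] := condense S ncI.
have [nb Hnb] : {nb : seq nat -> nat & forall t, (exists n', Sat b t n') -> Sat b t (nb t)}.
  apply: (@choice _ _ (fun t n => (exists n', Sat b t n') -> Sat b t n)) => t; case: (pselect (exists n', Sat b t n')) => [[n' h]|h].
    by exists n'.
  by exists 0%N.
pose C j := [seq (t, nb t) | t <- pmap (@unpickle (seq nat)) (iota 0 j.+1)
   & `[< exists n, Sat b t n >]].
have SC : forall j, S (C j) b.
  move=> j [t n] /mapP[t']; rewrite mem_filter => /andP[/asboolP ex _] [-> ->].
  exact: Hnb.
have Hpick : forall h : seq I, exists a, S (C (size h)) a /\ ~ List.In a h.
  move=> h; have := infinite_setD (Hb _ (SC (size h))) (finite_list _ h).
  by move=> /infinite_setN0 [a [Sa nIn]]; exists a.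
have [pn Hpn] := choice Hpick.
pose hist j := iter j (fun h => rcons h (pn h)) [::].
pose A j := pn (hist j).
have size_hist : forall j, size (hist j) = j.
  by elim => //= j IH; rewrite size_rcons IH.
have in_hist : forall i j, (i < j)%N -> List.In (A i) (hist j).
  move=> i; elim=> // j IH; rewrite ltnS leq_eqVlt => /orP[/eqP ->|/IH hi] /=;
  rewrite -cats1; apply List.in_or_app; [right; left | left] => //.
have SA : forall j, S (C j) (A j).
  by move=> j; have [+ _] := Hpn (hist j); rewrite size_hist.
have injA : injective A.
  move=> i j eq; apply/eqP; case: (ltngtP i j) => // hij; exfalso.
    by apply: (Hpn (hist j)).2; rewrite -/(A j) -eq; exact: in_hist.
  by apply: (Hpn (hist i)).2; rewrite -/(A i) eq; exact: in_hist.
exists (range A); split.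
- by apply: (sub_countable (card_image_le _ _)); apply: countableP.
- move=> fin; apply: infinite_nat.
  apply: (sub_finite_set _ (finite_preimage _ fin)).
    by move=> i _; exists i.
  by move=> i j _ _; exact: injA.
- move=> O hO; have [al hal] := hU2 O hO.
  have [k [n0 Hk]] := @banakh _ _ _ hU1 hU3 _ (hs b) al.
  set t := mkseq al k.
  have Sbt : Sat b t (nb t).
    apply: Hnb; exists n0 => m hm be; rewrite size_mkseq; exact: Hk m hm be.
  have [Nf HNf] := choice (fun j => ev (hs (A j)) (hU1 al)).
  exists (nb t + \max_(j < pickle t) Nf j)%N => m hm a [j _ <-].
  apply: hal; case: (ltnP j (pickle t)) => hj.
    apply: HNf; apply: leq_trans hm; apply: leq_trans (leq_addl _ _).
    exact: (@leq_bigmax _ (fun i : 'I_(pickle t) => Nf i) (Ordinal hj)).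
  apply: (SA j (t, nb t)) => /=.
  + apply/mapP; exists t => //; rewrite mem_filter; apply/andP; split.
      by apply/asboolP; exists (nb t).
    rewrite mem_pmap; apply/mapP; exists (pickle t); last by rewrite pickleK.
    by rewrite mem_iota /= add0n ltnS.
  + exact: leq_trans (leq_addr _ _) hm.
  + by rewrite size_mkseq.
Qed.
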